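(* Suppose $\kappa$ is Mahlo and $\kappa\le\lambda$. Then for every function $f:P_\kappa\lambda\to P_\kappa\lambda$, the set $C_f$ is a $1$-club subset of $P_\kappa\lambda$.
   Context: $P_\kappa\lambda=\{x\subseteq\lambda:|x|<\kappa\}$, $\kappa_x=|x\cap\kappa|$. $C_f=\{x\in P_\kappa\lambda: x\cap\kappa\neq\emptyset,\ f[P_{\kappa_x}x]\subseteq P_{\kappa_x}x\}$. A set is strongly stationary if it meets every $C_f$; $\mathrm{NSS}_{\kappa,\lambda}$ is the ideal of non-strongly-stationary sets; for $x\in P_\kappa\lambda$, $\mathrm{NSS}_{\kappa_x,x}$ is the analogous ideal on $P_{\kappa_x}x$ (with $\kappa_x$ in place of $\kappa$, $x$ in place of $\lambda$). $C\subseteq P_\kappa\lambda$ is $1$-club iff $C\in\mathrm{NSS}^+_{\kappa,\lambda}$ and for every $x\in P_\kappa\lambda$ with $\kappa_x$ inaccessible and $C\cap P_{\kappa_x}x\in\mathrm{NSS}^+_{\kappa_x,x}$ we have $x\in C$. *)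

(* Defs.v *)
From Stdlib Require Import Classical.

Set Implicit Arguments.

(* A strict well-order: its elements play the role of ordinals, each element
   a being identified with the set of its predecessors  seg a. *)
Record WO := {
  wcar :> Type;
  wlt : wcar -> wcar -> Prop;
  wlt_wf : well_founded wlt;
  wlt_trans : forall a b c, wlt a b -> wlt b c -> wlt a c;
  wlt_total : forall a b, wlt a b \/ a = b \/ wlt b a
}.

Section Defs.
Variable O : WO.
Notation "a < b" := (wlt O a b).
Definition wle (a b : O) : Prop := a < b \/ a = b.
Notation "a <= b" := (wle a b).

Definition set (T : Type) := T -> Prop.

Definition seg (a : O) : set O := fun b => b < a.

Definition cle {T U : Type} (A : set T) (B : set U) : Prop :=
  exists f : sig A -> sig B, forall u v, f u = f v -> u = v.
Definition clt {T U : Type} (A : set T) (B : set U) : Prop :=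
  cle A B /\ ~ cle B A.
Definition ceq {T U : Type} (A : set T) (B : set U) : Prop :=
  cle A B /\ cle B A.

Definition inter (A B : set O) : set O := fun z => A z /\ B z.

Definition is_card_of (alpha : O) (A : set O) : Prop :=
  ceq (seg alpha) A /\ forall beta, ceq (seg beta) A -> ~ beta < alpha.

Definition Pk (mu : O) (X : set O) (y : set O) : Prop :=
  (forall z, y z -> X z) /\ clt y (seg mu).

(* C_f relative to P_mu X:
   { y in P_mu X : y cap mu <> empty, f[P_{mu_y} y] subset P_{mu_y} y },
   where mu_y = |y cap mu|. *)
Definition Cf (mu : O) (X : set O) (f : set O -> set O) (y : set O) : Prop :=
  Pk mu X y /\ (exists z, y z /\ z < mu) /\
  exists a, is_card_of a (inter y (seg mu)) /\
            forall w, Pk a y w -> Pk a y (f w).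

Definition strongly_stationary (mu : O) (X : set O) (A : set (set O)) : Prop :=
  forall f : set O -> set O,
    (forall y, Pk mu X y -> Pk mu X (f y)) ->
    exists y, A y /\ Cf mu X f y.

Definition nat_set : set nat := fun _ => True.
Definition is_cardinal (a : O) : Prop := forall b, b < a -> ~ cle (seg a) (seg b).
Definition infinite_ord (a : O) : Prop := cle nat_set (seg a).
Definition uncountable (a : O) : Prop := ~ cle (seg a) nat_set.
Definition unbounded_in (A : set O) (a : O) : Prop :=
  forall b, b < a -> exists c, A c /\ c < a /\ b <= c.
Definition regular (a : O) : Prop :=
  infinite_ord a /\ is_cardinal a /\
  forall A : set O, (forall z, A z -> z < a) -> unbounded_in A a ->
    ~ clt A (seg a).
Definition powerset_of (b : O) : set (set O) := fun Y => forall z, Y z -> z < b.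
Definition strong_limit (a : O) : Prop :=
  forall b, b < a -> clt (powerset_of b) (seg a).
Definition inaccessible (a : O) : Prop :=
  uncountable a /\ regular a /\ strong_limit a.

Definition club_in (C : set O) (k : O) : Prop :=
  (forall z, C z -> z < k) /\ unbounded_in C k /\
  forall g, g < k -> (exists d, C d /\ d < g) ->
    (forall b, b < g -> exists d, C d /\ b < d /\ d < g) -> C g.
Definition stationary_in (S : set O) (k : O) : Prop :=
  forall C, club_in C k -> exists a, S a /\ C a.

Definition Mahlo (k : O) : Prop :=
  inaccessible k /\ stationary_in (fun a => a < k /\ regular a) k.

Definition one_club (mu : O) (X : set O) (C : set (set O)) : Prop :=
  (forall y, C y -> Pk mu X y) /\
  strongly_stationary mu X C /\
  forall x, Pk mu X x ->
    forall a, is_card_of a (inter x (seg mu)) -> inaccessible a ->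
      strongly_stationary a x (fun y => C y /\ Pk a x y) -> C x.

End Defs.

Arguments wle {O}. Arguments seg {O}. Arguments inter {O}. Arguments is_card_of {O}. Arguments Pk {O}. Arguments Cf {O}.
Arguments strongly_stationary {O}. Arguments is_cardinal {O}. Arguments infinite_ord {O}.
Arguments uncountable {O}. Arguments unbounded_in {O}. Arguments regular {O}. Arguments powerset_of {O}.
Arguments strong_limit {O}. Arguments inaccessible {O}. Arguments club_in {O}. Arguments stationary_in {O}.
Arguments Mahlo {O}. Arguments one_club {O}.

(* Main.v *)
Require Import Defs.
From Stdlib Require Import Classical ClassicalEpsilon FunctionalExtensionality PropExtensionality ProofIrrelevance.

Notation "a ≺ b" := (wlt _ a b) (at level 70).

Definition cleF {T U : Type} (A : set T) (B : set U) : Prop :=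
  exists g : T -> U, (forall x, A x -> B (g x)) /\
    (forall x y, A x -> A y -> g x = g y -> x = y).

Lemma sig_eq {T} (P : T -> Prop) (a b : sig P) : proj1_sig a = proj1_sig b -> a = b.
Proof. destruct a, b; simpl; intros ->; f_equal; apply proof_irrelevance. Qed.

Lemma cleF_cle {T U} (A : set T) (B : set U) : cleF A B -> cle A B.
Proof.
  intros [g [Hm Hi]].
  exists (fun s => exist _ (g (proj1_sig s)) (Hm _ (proj2_sig s))).
  intros [x hx] [y hy] E. apply (f_equal (@proj1_sig _ _)) in E; simpl in E.
  apply sig_eq; simpl; auto.
Qed.

Lemma cle_cleF {T U} (u0 : U) (A : set T) (B : set U) : cle A B -> cleF A B.
Proof.
  intros [h Hh].
  exists (fun x => match excluded_middle_informative (A x) with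
                   | left H => proj1_sig (h (exist _ x H)) | right _ => u0 end).
  split.
  - intros x Hx. destruct (excluded_middle_informative (A x)); [apply proj2_sig|contradiction].
  - intros x y Hx Hy. destruct (excluded_middle_informative (A x)); [|contradiction].
    destruct (excluded_middle_informative (A y)); [|contradiction].
    intros E. apply sig_eq in E. apply Hh in E. apply (f_equal (@proj1_sig _ _)) in E. exact E.
Qed.

Lemma cle_trans {T U V} (A : set T) (B : set U) (C : set V) : cle A B -> cle B C -> cle A C.
Proof.
  intros [f Hf] [g Hg]. exists (fun s => g (f s)). intros u v E. auto.
Qed.

Lemma cle_sub {T} (A B : set T) : (forall x, A x -> B x) -> cle A B.
Proof.
  intros H. exists (fun s => exist _ (proj1_sig s) (H _ (proj2_sig s))).
  intros u v E. apply (f_equal (@proj1_sig _ _)) in E. apply sig_eq; exact E.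
Qed.

Lemma clt_trans_l {T U V} (A : set T) (B : set U) (C : set V) : cle A B -> clt B C -> clt A C.
Proof.
  intros H [H1 H2]. split. eapply cle_trans; eauto.
  intros H3. apply H2. eapply cle_trans; eauto.
Qed.

Lemma image_cle {T U} (A : set T) (g : T -> U) :
  cle (fun z => exists x, A x /\ z = g x) A.
Proof.
  exists (fun s => let (x, Hx) := constructive_indefinite_description _ (proj2_sig s) in
                   exist A x (proj1 Hx)).
  intros [z hz] [z' hz'] E. simpl in E.
  destruct (constructive_indefinite_description _ hz) as [x [Ax ->]].
  destruct (constructive_indefinite_description _ hz') as [x' [Ax' ->]].
  apply (f_equal (@proj1_sig _ _)) in E; simpl in E. subst. apply sig_eq; reflexivity.
Qed.
Section Ord.
Variable O : WO.

Lemma lt_irrefl (a : O) : ~ a ≺ a.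
Proof.
  induction (wlt_wf O a) as [a _ IH]. intros H. exact (IH a H H).
Qed.

Lemma min_elem (P : O -> Prop) : (exists x, P x) -> exists m, P m /\ forall y, P y -> ~ y ≺ m.
Proof.
  intros [x Hx]. revert Hx. induction (wlt_wf O x) as [x _ IH]. intros Hx.
  destruct (classic (exists y, P y /\ y ≺ x)) as [[y [Py Ly]]|N].
  - exact (IH y Ly Py).
  - exists x; split; auto. intros y Py Ly; apply N; eauto.
Qed.

Lemma lt_le_trans (a b c : O) : a ≺ b -> wle b c -> a ≺ c.
Proof. intros H [H'|<-]; [eapply wlt_trans; eauto|auto]. Qed.

Lemma not_lt_le (a b : O) : ~ a ≺ b -> wle b a.
Proof. intros H. destruct (wlt_total O a b) as [h|[h|h]]; [tauto|right; auto|left; auto]. Qed.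

Lemma reg_card (mu : O) : regular mu -> is_cardinal mu.
Proof. intros [_ [H _]]; exact H. Qed.

Lemma bound (mu : O) (S : set O) : regular mu -> (forall z, S z -> z ≺ mu) -> clt S (seg mu) ->
  exists d, d ≺ mu /\ forall z, S z -> z ≺ d.
Proof.
  intros [_ [_ R]] HS Hc.
  destruct (classic (unbounded_in S mu)) as [U|NU].
  - exfalso; exact (R S HS U Hc).
  - apply not_all_ex_not in NU as [b Hb]. apply imply_to_and in Hb as [bl Hb].
    exists b; split; auto. intros z Sz.
    destruct (wlt_total O z b) as [h|[h|h]]; auto; exfalso; apply Hb; exists z;
      repeat split; auto; [right; auto|left; auto].
Qed.

Lemma bounded_inj {T} (mu : O) (X : set T) : regular mu -> clt X (seg mu) ->
  exists b, b ≺ mu /\ exists e : T -> O, (forall x, X x -> e x ≺ b) /\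
     (forall x y, X x -> X y -> e x = e y -> x = y).
Proof.
  intros R Hc. destruct Hc as [H1 H2].
  destruct (cle_cleF mu X (seg mu) H1) as [e [em ei]].
  set (S := fun z => exists x, X x /\ z = e x).
  destruct (bound mu S R) as [d [dl Hd]].
  - intros z [x [Hx ->]]; apply em; auto.
  - eapply clt_trans_l; [apply image_cle|split; auto].
  - exists d; split; auto. exists e; split; auto. intros x Hx; apply Hd; exists x; auto.
Qed.

Lemma seg_small (k a : O) : is_cardinal k -> a ≺ k -> clt (seg a) (seg k).
Proof.
  intros Hk Ha. split.
  - apply cle_sub; intros x Hx; unfold seg in *; eapply wlt_trans; eauto.
  - apply Hk; auto.
Qed.

Lemma clt_mono {T} (X : set T) (m k : O) : (forall x, x ≺ m -> x ≺ k) -> clt X (seg m) -> clt X (seg k).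
Proof.
  intros H [H1 H2]. split.
  - eapply cle_trans; [exact H1|apply cle_sub; auto].
  - intros H3. apply H2. eapply cle_trans; [apply cle_sub; exact H|exact H3].
Qed.
End Ord.
Section Inacc.
Variable O : WO.
Variable k : O.
Hypothesis Hin : inaccessible k.

Let Hreg : regular k. Proof. apply Hin. Qed.
Let Hcard : is_cardinal k. Proof. apply reg_card, Hreg. Qed.
Let Hsl : strong_limit k. Proof. apply Hin. Qed.

Lemma nat_small : clt nat_set (seg k).
Proof. split; [apply Hreg|apply Hin]. Qed.

Lemma small_of_nat {T} (A : set T) : cle A nat_set -> clt A (seg k).
Proof. intros H; eapply clt_trans_l; [exact H|apply nat_small]. Qed.

Lemma pow_small (X : set O) : clt X (seg k) -> clt (fun w : set O => forall u, w u -> X u) (seg k).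
Proof.
  intros HX. destruct (bounded_inj _ _ X Hreg HX) as [b [bl [e [em ei]]]].
  eapply clt_trans_l; [|apply (Hsl b bl)].
  apply cleF_cle. exists (fun w => fun z => exists u, w u /\ z = e u). split.
  - intros w Hw z [u [Hu ->]]. apply em; auto.
  - intros w1 w2 H1 H2 E. apply functional_extensionality; intro u.
    apply propositional_extensionality; split; intro Hu.
    + assert (Hi : (fun z => exists u, w1 u /\ z = e u) (e u)) by (exists u; auto).
      rewrite E in Hi. destruct Hi as [u' [Hu' Ee]].
      rewrite (ei u u'); auto.
    + assert (Hi : (fun z => exists u, w2 u /\ z = e u) (e u)) by (exists u; auto).
      rewrite <- E in Hi. destruct Hi as [u' [Hu' Ee]].
      rewrite (ei u u'); auto.
Qed.

Lemma kur (eps : O) (j : set O -> O)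
  (ji : forall P Q, powerset_of eps P -> powerset_of eps Q -> j P = j Q -> P = Q)
  (a b c d : O) : a ≺ eps -> b ≺ eps -> c ≺ eps -> d ≺ eps ->
  (fun x => x = j (fun y => y = a) \/ x = j (fun y => y = a \/ y = b)) =
  (fun x => x = j (fun y => y = c) \/ x = j (fun y => y = c \/ y = d)) -> a = c /\ b = d.
Proof.
  intros ha hb hc hd E.
  assert (HE : forall x, (x = j (fun y => y = a) \/ x = j (fun y => y = a \/ y = b)) <->
                         (x = j (fun y => y = c) \/ x = j (fun y => y = c \/ y = d))).
  { intros x. assert (H := f_equal (fun P => P x) E). simpl in H. rewrite H. tauto. }
  assert (S1 : forall p, p ≺ eps -> powerset_of eps (fun y => y = p)) by (intros p hp y ->; auto).
  assert (S2 : forall p q, p ≺ eps -> q ≺ eps -> powerset_of eps (fun y => y = p \/ y = q))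
    by (intros p q hp hq y [->| ->]; auto).
  assert (ac : a = c).
  { destruct (proj1 (HE _) (or_introl eq_refl)) as [H|H]; apply ji in H; auto.
    - assert (H' := f_equal (fun P => P c) H); simpl in H'. symmetry; rewrite H'; reflexivity.
    - assert (H' := f_equal (fun P => P c) H); simpl in H'. symmetry; rewrite H'; left; reflexivity. }
  subst c. split; auto.
  destruct (proj1 (HE _) (or_intror eq_refl)) as [H|H]; apply ji in H; auto.
  - assert (H' := f_equal (fun P => P b) H); simpl in H'.
    assert (ba : b = a) by (rewrite <- H'; right; reflexivity). subst b.
    destruct (proj2 (HE _) (or_intror eq_refl)) as [H2|H2]; apply ji in H2; auto.
    + assert (H3 := f_equal (fun P => P d) H2); simpl in H3. symmetry; rewrite <- H3; right; reflexivity.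
    + assert (H3 := f_equal (fun P => P d) H2); simpl in H3.
      assert (dd : d = a \/ d = a) by (rewrite <- H3; right; reflexivity). destruct dd; auto.
  - assert (H' := f_equal (fun P => P b) H); simpl in H'.
    assert (bb : b = a \/ b = d) by (rewrite <- H'; right; reflexivity).
    destruct bb as [ba|bd]; auto.
    subst b. assert (H3 := f_equal (fun P => P d) H); simpl in H3.
    assert (dd : d = a \/ d = a) by (rewrite H3; right; reflexivity). destruct dd; auto.
Qed.

Lemma union_small {T} (t0 : T) (I : set T) (B : T -> set O) :
  clt I (seg k) -> (forall i, I i -> clt (B i) (seg k)) ->
  clt (fun z => exists i, I i /\ B i z) (seg k).
Proof.
  intros HI HB.
  destruct (bounded_inj _ _ I Hreg HI) as [ga [gl [io [iom ioi]]]].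
  set (Pr := fun i (p : O * (O -> O)) => fst p ≺ k /\ (forall z, B i z -> snd p z ≺ fst p) /\
         (forall x y, B i x -> B i y -> snd p x = snd p y -> x = y)).
  set (pe := fun i => epsilon (inhabits (k, fun x : O => x)) (Pr i)).
  assert (Hpe : forall i, I i -> Pr i (pe i)).
  { intros i Hi. apply epsilon_spec.
    destruct (bounded_inj _ _ _ Hreg (HB i Hi)) as [b [bl [e [em ei]]]].
    exists (b, e). split; [|split]; auto. }
  set (Bs := fun b => exists i, I i /\ b = fst (pe i)).
  destruct (bound _ k Bs Hreg) as [d [dl Hd]].
  { intros b [i [Hi ->]]; apply (Hpe i Hi). }
  { eapply clt_trans_l; [apply image_cle|exact HI]. }
  assert (Heps : exists eps, eps ≺ k /\ (forall x, x ≺ ga -> x ≺ eps) /\ (forall x, x ≺ d -> x ≺ eps)).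
  { destruct (wlt_total O ga d) as [h|[h|h]].
    - exists d; repeat split; auto; intros; eapply wlt_trans; eauto.
    - subst; exists d; auto.
    - exists ga; repeat split; auto; intros; eapply wlt_trans; eauto. }
  destruct Heps as [eps [el [Eg Ed]]].
  destruct (bounded_inj _ _ _ Hreg (Hsl eps el)) as [e1 [e1l [j [jm ji]]]].
  eapply clt_trans_l; [|apply (Hsl e1 e1l)].
  set (ch := fun z => epsilon (inhabits t0) (fun i => I i /\ B i z)).
  assert (Hch : forall z, (exists i, I i /\ B i z) -> I (ch z) /\ B (ch z) z).
  { intros z Hz. apply epsilon_spec. exact Hz. }
  set (K := fun a b => fun x => x = j (fun y => y = a) \/ x = j (fun y => y = a \/ y = b)).
  assert (Ha : forall z, (exists i, I i /\ B i z) -> io (ch z) ≺ eps).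
  { intros z Hz. destruct (Hch z Hz). apply Eg, iom; auto. }
  assert (Hb : forall z, (exists i, I i /\ B i z) -> snd (pe (ch z)) z ≺ eps).
  { intros z Hz. destruct (Hch z Hz) as [Hi Hbz]. apply Ed.
    eapply wlt_trans; [apply (Hpe _ Hi); exact Hbz|]. apply Hd. exists (ch z); auto. }
  apply cleF_cle. exists (fun z => K (io (ch z)) (snd (pe (ch z)) z)). split.
  - intros z Hz x [->| ->]; apply jm.
    + intros y ->; apply Ha; auto.
    + intros y [->| ->]; [apply Ha|apply Hb]; auto.
  - intros z z' Hz Hz' E.
    assert (JI : forall P Q, powerset_of eps P -> powerset_of eps Q -> j P = j Q -> P = Q).
    { intros P Q HP HQ EPQ. apply ji; auto. }
    destruct (kur eps j JI _ _ _ _ (Ha z Hz) (Hb z Hz) (Ha z' Hz') (Hb z' Hz') E) as [E1 E2].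
    destruct (Hch z Hz) as [Hi Hbz]. destruct (Hch z' Hz') as [Hi' Hbz'].
    apply ioi in E1; auto. rewrite <- E1 in E2, Hbz'.
    apply (Hpe _ Hi); auto.
Qed.

Lemma union2_small (A B : set O) : clt A (seg k) -> clt B (seg k) ->
  clt (fun z => A z \/ B z) (seg k).
Proof.
  intros HA HB.
  eapply clt_trans_l; [|apply (union_small true (fun _ => True) (fun b => if b then A else B))].
  - apply cle_sub. intros z [H|H]; [exists true|exists false]; auto.
  - apply small_of_nat. apply cleF_cle. exists (fun b : bool => if b then 0 else 1).
    split; [intros; exact I|]. intros [] [] _ _ E; auto; discriminate.
  - intros [] _; auto.
Qed.

Lemma single_small (x : O) : clt (fun z => z = x) (seg k).
Proof.
  apply small_of_nat, cleF_cle. exists (fun _ => 0). split; [intros; exact I|].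
  intros a b -> ->; auto.
Qed.
End Inacc.
Section Main.
Variable O : WO.
Variables k lam : O.
Hypothesis Hmah : Mahlo k.
Hypothesis Hle : wle k lam.
Variables f g : set O -> set O.
Hypothesis Hf : forall y, Pk k (seg lam) y -> Pk k (seg lam) (f y).
Hypothesis Hg : forall y, Pk k (seg lam) y -> Pk k (seg lam) (g y).

Let Hin : inaccessible k. Proof. apply Hmah. Qed.
Let Hreg : regular k. Proof. apply Hin. Qed.
Let Hcard : is_cardinal k. Proof. apply reg_card, Hreg. Qed.

Definition rho (h : set O -> set O) (w : set O) : O :=
  epsilon (inhabits k) (fun r => r ≺ k /\ cle (h w) (seg r)).

Lemma rho_spec h w : (forall y, Pk k (seg lam) y -> Pk k (seg lam) (h y)) ->
  Pk k (seg lam) w -> rho h w ≺ k /\ cle (h w) (seg (rho h w)).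
Proof.
  intros Hh Hw. unfold rho. apply epsilon_spec.
  destruct (bounded_inj _ _ _ Hreg (proj2 (Hh w Hw))) as [b [bl [e [em ei]]]].
  exists b; split; auto. apply cleF_cle; exists e; auto.
Qed.

Definition Qs (w : set O) (z : O) : Prop := f w z \/ g w z \/ z = rho f w \/ z = rho g w.

Inductive inA : O -> O -> Prop :=
| A_seg : forall a z, z ≺ a -> inA a z
| A_fun : forall a b w z, b ≺ a -> (forall u, w u -> inA b u) -> Pk k (seg lam) w -> Qs w z -> inA a z.

Lemma inA_stage a z : inA a z -> exists b, b ≺ a /\ forall a', b ≺ a' -> inA a' z.
Proof.
  intros H; destruct H as [a z H|a b w z H1 H2 H3 H4].
  - exists z; split; auto. intros; apply A_seg; auto.
  - exists b; split; auto. intros; eapply A_fun; eauto.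
Qed.

Lemma Qs_lam w z : Pk k (seg lam) w -> Qs w z -> z ≺ lam.
Proof.
  intros Hw [H|[H|[H|H]]].
  - apply (proj1 (Hf w Hw)); auto.
  - apply (proj1 (Hg w Hw)); auto.
  - subst; eapply lt_le_trans; [apply (rho_spec f w Hf Hw)|auto].
  - subst; eapply lt_le_trans; [apply (rho_spec g w Hg Hw)|auto].
Qed.

Lemma inA_lam a z : a ≺ k -> inA a z -> z ≺ lam.
Proof.
  intros ha H; destruct H as [a z H|a b w z H1 H2 H3 H4].
  - eapply lt_le_trans; [eapply wlt_trans; eauto|auto].
  - eapply Qs_lam; eauto.
Qed.

Lemma Qs_small w : Pk k (seg lam) w -> clt (Qs w) (seg k).
Proof.
  intros Hw. unfold Qs.
  apply (union2_small _ k Hin); [apply (Hf w Hw)|].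
  apply (union2_small _ k Hin); [apply (Hg w Hw)|].
  apply (union2_small _ k Hin); apply (single_small _ k Hin).
Qed.

Lemma inA_small : forall a, a ≺ k -> clt (inA a) (seg k).
Proof.
  intros a. induction (wlt_wf O a) as [a _ IH]. intros ha.
  eapply clt_trans_l; [|apply (union2_small _ k Hin (seg a)
     (fun z => exists b, seg a b /\ (fun b z => exists w, ((forall u, w u -> inA b u) /\ Pk k (seg lam) w) /\ Qs w z) b z))].
  - apply cle_sub. intros z H; destruct H as [a z H|a b w z H1 H2 H3 H4].
    + left; auto.
    + right. exists b; split; auto. exists w; auto.
  - apply seg_small; auto.
  - apply (union_small _ k Hin k); [apply seg_small; auto|].
    intros b hb. apply (union_small _ k Hin (fun _ => False)).
    + eapply clt_trans_l; [|apply (pow_small _ k Hin (inA b))].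
      * apply cle_sub. intros w [H _]; auto.
      * apply IH; auto. eapply wlt_trans; eauto.
    + intros w [_ Hw]. apply Qs_small; auto.
Qed.

Definition gam (a : O) : O :=
  epsilon (inhabits k) (fun d => d ≺ k /\ forall z, inA a z -> z ≺ k -> z ≺ d).

Lemma gam_spec a : a ≺ k -> gam a ≺ k /\ forall z, inA a z -> z ≺ k -> z ≺ gam a.
Proof.
  intros ha. unfold gam; apply epsilon_spec.
  assert (S1 : forall z, inA a z /\ z ≺ k -> z ≺ k) by (intros z [_ H]; auto).
  assert (S2 : clt (fun z => inA a z /\ z ≺ k) (seg k)).
  { eapply clt_trans_l; [|apply (inA_small a ha)]. apply cle_sub; intros z [H _]; auto. }
  destruct (bound _ k (fun z => inA a z /\ z ≺ k) Hreg S1 S2) as [d [dl Hd]].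
  exists d; split; [exact dl|intros z H1 H2; apply Hd; auto].
Qed.

Fixpoint bs (b : O) (n : nat) : O := match n with 0 => b | S n => gam (bs b n) end.

Lemma bs_lt b n : b ≺ k -> bs b n ≺ k.
Proof. intros hb; induction n; simpl; auto. apply gam_spec; auto. Qed.

Definition Dc (m : O) : Prop := m ≺ k /\ forall z, inA m z -> z ≺ k -> z ≺ m.

Lemma Dc_club : club_in Dc k.
Proof.
  split; [|split].
  - intros z [H _]; auto.
  - intros b hb.
    destruct (bound _ k (fun z => exists n, nat_set n /\ z = bs b n) Hreg) as [d [dl Hd]].
    + intros z [n [_ ->]]; apply bs_lt; auto.
    + apply (small_of_nat _ k Hin), image_cle.
    + destruct (min_elem _ (fun m => forall n, wle (bs b n) m)) as [m [Pm Mm]].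
      { exists d; intros n; left; apply Hd; exists n; split; [exact I|auto]. }
      assert (mk : m ≺ k).
      { assert (W : wle m d).
        { apply not_lt_le. apply Mm. intros n; left; apply Hd; exists n; split; [exact I|auto]. }
        destruct W as [W| ->]; [eapply wlt_trans; eauto|auto]. }
      exists m; split; [split|split]; auto; [|apply (Pm 0)].
      intros z Hz zk. destruct (inA_stage _ _ Hz) as [b' [bl' Hb']].
      assert (Hn : exists n, b' ≺ bs b n).
      { apply NNPP; intro N. apply (Mm b'); auto. intros n. apply not_lt_le.
        intro L; apply N; eauto. }
      destruct Hn as [n Hn].
      eapply lt_le_trans; [|apply (Pm (S n))]. simpl.
      apply gam_spec; auto. apply bs_lt; auto.
  - intros a ha _ Hub. split; auto. intros z Hz zk.
    destruct (inA_stage _ _ Hz) as [b [bl Hb]].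
    destruct (Hub b bl) as [d [[dk Dd] [bd da]]].
    eapply wlt_trans; [apply Dd; auto|exact da].
Qed.

Lemma closure_part (h : set O -> set O) (m : O) :
  (forall y, Pk k (seg lam) y -> Pk k (seg lam) (h y)) ->
  (forall w z, h w z -> Qs w z) -> (forall w, Qs w (rho h w)) ->
  Dc m -> regular m -> Cf k (seg lam) h (inA m).
Proof.
  intros Hh HQ HR [mk Dm] Rm.
  assert (Cm := reg_card _ _ Rm).
  split; [|split].
  - split; [intros z Hz; eapply inA_lam; eauto|apply inA_small; auto].
  - destruct Rm as [[e _] _]. destruct (e (exist _ 0 I)) as [z hz].
    exists z; split; [apply A_seg; auto|eapply wlt_trans; eauto].
  - exists m; split; [split; [split|]|].
    + apply cle_sub; intros z hz; split; [apply A_seg; auto|eapply wlt_trans; eauto].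
    + apply cle_sub; intros z [h1 h2]; apply Dm; auto.
    + intros b [H1 H2] bm. apply (Cm b bm). eapply cle_trans; [|exact H2].
      apply cle_sub; intros z hz; split; [apply A_seg; auto|eapply wlt_trans; eauto].
    + intros w [Hws Hwc].
      set (st := fun u => epsilon (inhabits k) (fun b => b ≺ m /\ forall a', b ≺ a' -> inA a' u)).
      assert (Hst : forall u, w u -> st u ≺ m /\ forall a', st u ≺ a' -> inA a' u).
      { intros u hu. apply epsilon_spec. apply inA_stage; auto. }
      destruct (bound _ m (fun b => exists u, w u /\ b = st u) Rm) as [d [dm Hd]].
      { intros b [u [hu ->]]; apply Hst; auto. }
      { eapply clt_trans_l; [apply image_cle|exact Hwc]. }
      assert (Hwd : forall u, w u -> inA d u).
      { intros u hu. apply (Hst u hu). apply Hd; eauto. }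
      assert (Pw : Pk k (seg lam) w).
      { split. intros u hu; eapply inA_lam; [exact mk|auto].
        eapply clt_mono; [|exact Hwc]. intros x hx; eapply wlt_trans; eauto. }
      destruct (rho_spec h w Hh Pw) as [rk rc].
      assert (rin : inA m (rho h w)) by exact (A_fun m d w _ dm Hwd Pw (HR w)).
      assert (rm : rho h w ≺ m) by (apply Dm; auto).
      split.
      * intros z hz. exact (A_fun m d w z dm Hwd Pw (HQ w z hz)).
      * split.
        -- eapply cle_trans; [exact rc|apply cle_sub; intros x hx; eapply wlt_trans; eauto].
        -- intros C. apply (Cm _ rm). eapply cle_trans; eauto.
Qed.

Lemma ss_part : exists y, Cf k (seg lam) f y /\ Cf k (seg lam) g y.
Proof.
  destruct (proj2 Hmah Dc Dc_club) as [m [[mk Rm] Dm]].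
  exists (inA m); split; apply closure_part; auto; unfold Qs; tauto.
Qed.
End Main.
Lemma part3 (O : WO) (k lam : O) (f : set O -> set O) (x : set O) (a : O) :
  Pk k (seg lam) x -> is_card_of a (inter x (seg k)) -> inaccessible a ->
  strongly_stationary a x (fun y => Cf k (seg lam) f y /\ Pk a x y) -> Cf k (seg lam) f x.
Proof.
  intros Px [[Ca1 Ca2] Ca3] Ia SS.
  assert (Ra : regular a) by apply Ia.
  assert (Cda := reg_card _ _ Ra).
  assert (ak : forall z, z ≺ a -> z ≺ k).
  { intros z hz. destruct (wlt_total O k a) as [h|[h|h]].
    - exfalso. apply (Cda k h). eapply cle_trans; [exact Ca1|].
      apply cle_sub; intros u [_ hu]; exact hu.
    - subst; auto.
    - eapply wlt_trans; eauto. }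
  split; [exact Px|split].
  - destruct Ra as [[e _] _]. destruct (e (exist _ 0 I)) as [z0 h0].
    destruct Ca1 as [h _]. destruct (h (exist _ z0 h0)) as [z [hz1 hz2]]. exists z; auto.
  - exists a; split; [exact (conj (conj Ca1 Ca2) Ca3)|].
    intros w Pw.
    destruct (SS (fun _ => w)) as [y [[Cfy Py] Cgy]]; [intros; auto|].
    destruct Cfy as [_ [_ [c [[[Cc1 Cc2] _] Hc]]]].
    destruct Cgy as [_ [[z [yz za]] [b [[[Cb1 Cb2] _] Hb]]]].
    assert (Pe : Pk b y (fun _ => False)).
    { split; [intros _ []|]. split.
      - apply cleF_cle. exists (fun u => u). split; intros; contradiction.
      - intros C. destruct Cb2 as [h _]. destruct (h (exist _ z (conj yz za))) as [v hv].
        destruct C as [h2 _]. destruct (h2 (exist _ v hv)); contradiction. }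
    destruct (Hb _ Pe) as [wy [wc1 wc2]].
    assert (Sub : cle (inter y (seg a)) (inter y (seg k))).
    { apply cle_sub; intros u [h1 h2]; split; [exact h1|apply ak; exact h2]. }
    assert (Pwc : Pk c y w).
    { split; auto. split.
      - eapply cle_trans; [exact wc1|]. eapply cle_trans; [exact Cb1|].
        eapply cle_trans; [exact Sub|exact Cc2].
      - intros C. apply wc2. eapply cle_trans; [exact Cb1|].
        eapply cle_trans; [exact Sub|]. eapply cle_trans; [exact Cc2|exact C]. }
    destruct (Hc w Pwc) as [fy [fc1 fc2]].
    destruct Py as [yx [ya1 ya2]].
    assert (Hyk : cle (seg c) y).
    { eapply cle_trans; [exact Cc1|]. apply cle_sub; intros u [h _]; exact h. }
    split; [intros u hu; apply yx, fy, hu|]. split.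
    + eapply cle_trans; [exact fc1|]. eapply cle_trans; [exact Hyk|exact ya1].
    + intros C. apply ya2. eapply cle_trans; [exact C|]. eapply cle_trans; [exact fc1|exact Hyk].
Qed.

Theorem lemma5p1 (O : WO) (kappa lambda : O) :
  Mahlo kappa -> wle kappa lambda ->
  forall f : set O -> set O,
    (forall y, Pk kappa (seg lambda) y -> Pk kappa (seg lambda) (f y)) ->
    one_club kappa (seg lambda) (Cf kappa (seg lambda) f).
Proof.
  intros Hm Hle f Hf. split; [|split].
  - intros y H; apply H.
  - intros g Hg. destruct (ss_part O kappa lambda Hm Hle f g Hf Hg) as [y [H1 H2]].
    exists y; auto.
  - intros x Px a Ca Ia SS. eapply part3; eauto.
Qed.
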